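(* For $n\geq1$, $\sum_{\pi\in\mathfrak{S}_n}x^{\mathrm{cpk}(\pi)}(-1)^{n-\mathrm{cyc}(\pi)}=(1-x)^{\lfloor n/2\rfloor}$.
   Context: For $\pi\in\mathfrak{S}_n$, $\mathrm{cyc}(\pi)$ is the number of cycles and a cycle peak is an $i\in[n]$ with $\pi^{-1}(i)<i>\pi(i)$; $\mathrm{cpk}(\pi)$ is the number of cycle peaks. *)

(* Defs.v *)
From mathcomp Require Import all_boot all_order all_algebra all_fingroup.
Set Implicit Arguments. Unset Strict Implicit. Unset Printing Implicit Defensive.
Import GRing.Theory.

(* Number of cycles of a permutation (fixed points count as cycles). *)
Definition cyc n (s : 'S_n) : nat := #|porbits s|.

(* Cycle peak: i with s^-1(i) < i > s(i) (values compared as naturals 0..n-1,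
   order-isomorphic to 1..n). *)
Definition is_cpeak n (s : 'S_n) (i : 'I_n) : bool :=
  ((s^-1)%g i < i)%N && (s i < i)%N.

Definition cpk n (s : 'S_n) : nat := #|[set i | is_cpeak s i]|.

(* Main.v *)
Require Import Defs.
From mathcomp Require Import all_boot all_order all_algebra all_fingroup.
From mathcomp Require Import ring.
Import GRing.Theory.

Section Comb.
Variable n : nat.

Definition ext (s : 'S_n) : 'S_n.+1 := lift_perm ord_max ord_max s.
Definition ins (s : 'S_n) (j : 'I_n.+1) : 'S_n.+1 := (tperm j ord_max * ext s)%g.
Definition wd (i : 'I_n) : 'I_n.+1 := widen_ord (leqnSn n) i.

Lemma wd_lift i : wd i = lift ord_max i.
Proof. by apply: val_inj; rewrite /= /bump leqNgt ltn_ord. Qed.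

Lemma wd_neq i : (wd i == ord_max) = false.
Proof. by apply/negbTE; rewrite neq_ltn /= ltn_ord. Qed.

Lemma ext_wd s i : ext s (wd i) = wd (s i).
Proof. by rewrite !wd_lift /ext lift_perm_lift. Qed.

Lemma ext_max s : ext s ord_max = ord_max.
Proof. by rewrite /ext lift_perm_id. Qed.

Lemma extV s : (ext s)^-1%g = ext s^-1%g.
Proof. by rewrite /ext lift_permV. Qed.

Lemma wd_inj : injective wd.
Proof. by move=> i j /(congr1 val) /= /val_inj. Qed.

Lemma tp_wd j i : tperm (wd j) ord_max (wd i) = if i == j then ord_max else wd i.
Proof.
case: eqP => [->|/eqP ne]; first by rewrite tpermL.
by rewrite tpermD // ?(inj_eq wd_inj) 1?eq_sym // wd_neq.
Qed.

Lemma ins_inj : injective (fun p : 'S_n * 'I_n.+1 => ins p.1 p.2).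
Proof.
move=> [s j] [t k] /= E.
have Hj : forall s j, ins s j j = ord_max.
  by move=> s' j'; rewrite /ins permM tpermL ext_max.
have jk : j = k.
  by apply: (@perm_inj _ (ins t k)); rewrite -{1}E !Hj.
subst k; move: E; rewrite /ins => /mulgI E.
congr pair; apply/permP => i.
have := congr1 (fun f : 'S_n.+1 => f (wd i)) E; rewrite /= !ext_wd.
exact: wd_inj.
Qed.

Lemma card_sum (T : finType) (B : {set T}) : #|B| = (\sum_i (i \in B : nat))%N.
Proof. by rewrite -sum1_card big_mkcond /=; apply: eq_bigr => i _; case: (i \in B). Qed.

Definition PK (s : 'S_n) : {set 'I_n} := [set i | is_cpeak s i].

Lemma cpk_ext s : cpk (ext s) = cpk s.
Proof.
rewrite /cpk card_sum big_ord_recr /= inE /is_cpeak ext_max ltnn andbF addn0.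
rewrite [RHS]card_sum; apply: eq_bigr => i _.
rewrite -/(wd i) !inE /is_cpeak extV !ext_wd /=.
done.
Qed.

Lemma cpk_ins s j :
  cpk (ins s (wd j)) = (#|PK s :\ j :\ s j|).+1.
Proof.
rewrite /cpk card_sum big_ord_recr /= inE /is_cpeak.
have -> : ((ins s (wd j))^-1)%g ord_max = wd j.
  by rewrite /ins invMg permM extV ext_max tpermV tpermR.
have -> : ins s (wd j) ord_max = wd (s j).
  by rewrite /ins permM tpermR ext_wd.
rewrite /= !ltn_ord addn1; congr S.
rewrite [RHS]card_sum; apply: eq_bigr => i _.
rewrite -/(wd i) !inE /is_cpeak /ins invMg !permM extV ext_wd tpermV !tp_wd.
case: (i =P j) => [->|ne].
 rewrite ext_max /=.
  have -> : (n < j)%N = false by rewrite ltnNge ltnW.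
  by rewrite !andbF.
rewrite ext_wd.
have -> : (s^-1%g i == j) = (i == s j).
  by rewrite -(inj_eq (@perm_inj _ s)) permKV.
case: (i == s j) => /=.
  have -> : (n < i)%N = false by rewrite ltnNge ltnW.
  done.
done.
Qed.


Lemma sign_ins s j : odd_perm (ins s j) = (j != ord_max) (+) odd_perm s.
Proof. by rewrite /ins odd_mul_tperm /ext odd_lift_perm addbb. Qed.

Lemma ins_max s : ins s ord_max = ext s.
Proof. by rewrite /ins tperm1 mul1g. Qed.

Lemma notpk_fix (s : 'S_n) j : s j = j -> is_cpeak s j = false.
Proof. by move=> E; rewrite /is_cpeak E ltnn andbF. Qed.

Lemma count_j s j : #|PK s| = ((j \in PK s) + (s j \in PK s) + #|PK s :\ j :\ s j|)%N
  /\ ~~ ((j \in PK s) && (s j \in PK s)).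
Proof.
split.
  rewrite (cardsD1 j) (cardsD1 (s j) (PK s :\ j)) addnA; congr (_ + _ + _)%N.
  rewrite !inE; case: (s j =P j) => [E|_] //=.
  by rewrite E (@notpk_fix s j E).
rewrite !inE /is_cpeak permK; apply/negP => /andP [/andP [_ h1] /andP [h2 _]].
by move: (ltn_trans h1 h2); rewrite ltnn.
Qed.

Local Open Scope ring_scope.

Definition sg {m} (s : 'S_m) : {poly int} := (-1) ^+ (odd_perm s).
Definition F (m : nat) : {poly int} := \sum_(s : 'S_m) 'X ^+ cpk s * sg s.

Lemma sgN (b : bool) : (-1) ^+ (~~ b) = - ((-1) ^+ b) :> {poly int}.
Proof. by case: b; rewrite /= ?expr1 ?expr0 ?opprK. Qed.

Lemma sg_ext s : sg (ext s) = sg s.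
Proof. by rewrite /sg /ext odd_lift_perm addbb. Qed.

Lemma sg_ins s j : sg (ins s (wd j)) = - sg s.
Proof. by rewrite /sg sign_ins wd_neq sgN. Qed.

Lemma step : F n.+1 = \sum_(s : 'S_n) sg s * ('X ^+ cpk s
   - ('X ^+ (cpk s).+1 *+ n + ('X ^+ cpk s - 'X ^+ (cpk s).+1) *+ (2 * cpk s))).
Proof.
rewrite /F (reindex (fun p : 'S_n * 'I_n.+1 => ins p.1 p.2)) /=; last first.
  apply: onW_bij; apply: inj_card_bij; first exact: ins_inj.
  by rewrite card_prod !card_Sn card_ord factS mulnC.
rewrite -(pair_big xpredT xpredT (fun s j => 'X ^+ cpk (ins s j) * sg (ins s j))) /=.
apply: eq_bigr => s _.
rewrite big_ord_recr /= ins_max cpk_ext sg_ext.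
rewrite (eq_bigr (fun j : 'I_n => - sg s * ('X ^+ (cpk s).+1 +
    ('X ^+ cpk s - 'X ^+ (cpk s).+1) *+ ((j \in PK s) + (s j \in PK s))))); last first.
  move=> j _; rewrite -/(wd j) sg_ins cpk_ins.
  have [E X] := count_j s j; rewrite /cpk -/(PK s) E.
  move: X; case: (j \in PK s); case: (s j \in PK s) => //= _;
    rewrite /sg ?add0n ?add1n ?mulr0n ?mulr1n ?addr0 ?mulNr ?mulrN; congr (- _);
    rewrite mulrC //; congr (_ * _); rewrite addrC subrK //.
rewrite -mulr_sumr big_split /= sumr_const card_ord sumrMnr big_split /=.
have h1 : (\sum_(i < n) (i \in PK s : nat))%N = cpk s by rewrite /cpk -/(PK s) card_sum.
have h2 : (\sum_(i < n) (s i \in PK s : nat))%N = cpk s.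
  by rewrite /cpk -/(PK s) card_sum [RHS](reindex_inj (@perm_inj _ s)).
rewrite h1 h2 mul2n -addnn.
by rewrite mulNr (mulrC _ (sg s)) mulrBr addrC.
Qed.

End Comb.

Local Open Scope ring_scope.

Lemma deriv_part m : 'X * (F m)^`() = \sum_(s : 'S_m) ('X ^+ cpk s *+ cpk s) * sg s.
Proof.
rewrite /F raddf_sum mulr_sumr; apply: eq_bigr => s _; rewrite /sg.
case: (odd_perm s) => /=; rewrite ?expr1 ?expr0 ?mulr1 ?mulrN1 ?derivN derivXn;
  case: (cpk s) => [|k] /=; rewrite ?mulr0n ?mulr0 ?oppr0 // ?mulrN. all: by rewrite ?mulr0 // mulrnAr -exprS.
Qed.

Lemma F0 : F 0 = 1.
Proof.
have all1 : forall s : 'S_0, s = 1%g by move=> s; apply/permP => -[].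
rewrite /F (big_pred1 1%g) //; last by move=> s; rewrite /= (all1 s) eqxx.
have -> : cpk (1%g : 'S_0) = 0%N.
  by apply/eqP; rewrite -leqn0 /cpk; apply: leq_trans (max_card _) _; rewrite card_ord.
by rewrite /sg odd_perm1 !expr0 mulr1.
Qed.

Lemma dOneX : (1 - 'X : {poly int})^`() = -1.
Proof. by rewrite derivB derivX -polyC1 derivC sub0r. Qed.

Lemma Fclosed m : F m = (1 - 'X) ^+ (m./2).
Proof.
elim: m => [|m IH]; first by rewrite F0.
rewrite step.
have -> : \sum_(s : 'S_m) sg s * ('X ^+ cpk s
   - ('X ^+ (cpk s).+1 *+ m + ('X ^+ cpk s - 'X ^+ (cpk s).+1) *+ (2 * cpk s)))
  = \sum_(s : 'S_m) ('X ^+ cpk s * sg s * (1 - 'X *+ m)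
      - (1 - 'X) * (('X ^+ cpk s *+ cpk s) * sg s) *+ 2).
  apply: eq_bigr => s _; rewrite exprS; ring.
rewrite sumrB -mulr_suml sumrMnl -mulr_sumr -deriv_part -/(F m) IH.
rewrite deriv_exp dOneX -uphalfE uphalf_half.
have -> : ('X *+ m : {poly int}) = 'X *+ (odd m + (m./2).*2) by rewrite odd_double_half.
move: (odd m) (m./2) => b h; rewrite -muln2.
case: b; case: h => [|h] /=; rewrite ?add1n ?add0n ?exprS ?expr0; ring.
Qed.

Theorem corollary5 (n : nat) (hn : (1 <= n)%N) :
  \sum_(s : 'S_n) 'X ^+ cpk s * (-1) ^+ (n - cyc s)%N
    = (1 - 'X) ^+ (n./2) :> {poly int}.
Proof.
rewrite -Fclosed /F; apply: eq_bigr => s _; congr (_ * _).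
have le : (cyc s <= n)%N.
  rewrite /cyc /porbits; apply: leq_trans (leq_imset_card _ _) _.
  by rewrite card_ord.
by rewrite /sg /odd_perm card_ord -signr_odd oddB.
Qed.
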